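(* Assume $p\ge2$ and $\hat\pi_k(x)>0$ for all $x\in\mathcal X_0$ and $k\in[1,p]$. Consider the following iteration for $T\ge1$: $\lambda_0(k)=1/p$, $g_0(x,k)=1/p$; for $t=0,\dots,T-1$: set $\ell_t(k)=D_{KL}(\hat{\mathsf p}_k\|\pi_{g_t})$; set $\lambda_{t+1}(k)=\lambda_t(k)e^{\eta_\lambda\ell_t(k)}/\sum_j\lambda_t(j)e^{\eta_\lambda\ell_t(j)}$; set $v_t(x,k)=-\frac{\hat{\mathsf p}_{\lambda_{t+1}}(x)}{\pi_{g_t}(x)}\hat\pi_k(x)$ for all $(x,k)\in\mathcal X_0\times[1,p]$; set $g_{t+1}=\Pi_{\mathcal G_1}(g_t-\eta_gv_t)$, where $\Pi_{\mathcal G_1}$ is the Euclidean projection onto $\mathcal G_1\subset\mathbb R^{\mathcal X_0\times[1,p]}$. Let $\bar g_T=\frac1T\sum_{t=1}^Tg_t$ and $\tilde V=\min_{g\in\mathcal G_1}\max_{\lambda\in\Delta}\tilde L(\lambda,g)$. Then there are constants $a,b,C>0$ depending only on $\mathcal G_1$, $\sup_{g\in\mathcal G_1,k}D_{KL}(\hat{\mathsf p}_k\|\pi_g)$ and $\sup_{g\in\mathcal G_1,\lambda\in\Delta}\|\nabla_g\tilde L(\lambda,g)\|_2$ (all finite under the positivity assumption) such that, with step sizes $\eta_\lambda=a/\sqrt T$ and $\eta_g=b/\sqrt T$, $$\max_{\lambda\in\Delta}\tilde L(\lambda,\bar g_T)-\tilde V\le C\sqrt{\frac{\log p}{T}} 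.$$
   Context: Fix an integer $p\ge 1$, $[1,p]=\{1,\dots,p\}$, $\Delta=\{\lambda\in\mathbb R^p:\lambda_k\ge 0,\ \sum_k\lambda_k=1\}$. Let $\hat{\mathsf p}_1,\dots,\hat{\mathsf p}_p$ be probability distributions with finite supports, $\mathcal X_0=\bigcup_k\mathrm{supp}(\hat{\mathsf p}_k)$, and $\hat\pi_1,\dots,\hat\pi_p$ probability distributions on $\mathcal X_0$. A gate is $g:\mathcal X_0\times[1,p]\to[0,1]$ with $\sum_kg(x,k)=1$ for each $x$; $\pi_g(x)=\sum_kg(x,k)\hat\pi_k(x)$, $Z_g=\sum_{x\in\mathcal X_0}\pi_g(x)$, $\mathcal G_1=\{g:Z_g=1\}$ (a compact convex subset of $\mathbb R^{\mathcal X_0\times[1,p]}$). For $\lambda\in\Delta$, $\hat{\mathsf p}_\lambda=\sum_k\lambda_k\hat{\mathsf p}_k$. $D_{KL}(P\|Q)=\sum_xP(x)\log\frac{P(x)}{Q(x)}$. The linearized payoff is $\tilde L(\lambda,g)=\sum_{k=1}^p\lambda_kD_{KL}(\hat{\mathsf p}_k\|\pi_g)$. *)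

(* Defs.v *)
From mathcomp Require Import all_boot all_order all_algebra.
From mathcomp Require Import all_classical all_reals.
From mathcomp Require Import sequences exp.
Set Implicit Arguments. Unset Strict Implicit. Unset Printing Implicit Defensive.
Import Order.TTheory GRing.Theory Num.Theory.
Local Open Scope classical_set_scope.
Local Open Scope ring_scope.

Section Defs.
Variables (R : realType) (X : finType) (p : nat).

(* A gate (or any point of R^{X0 x [1,p]}): indices [1,p] are 'I_p (0-based). *)
Definition gate := X -> 'I_p -> R.

(* KL divergence with the convention 0 log 0 = 0. *)
Definition KL (P Q : X -> R) : R :=
  \sum_(x | 0 < P x) P x * ln (P x / Q x).

Definition simplex : set ('I_p -> R) :=
  [set l | (forall k, 0 <= l k) /\ \sum_k l k = 1].

Definition is_gate (g : gate) : Prop :=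
  (forall x k, 0 <= g x k <= 1) /\ (forall x, \sum_k g x k = 1).

Variable pihat : 'I_p -> X -> R.

Definition pi_g (g : gate) (x : X) : R := \sum_k g x k * pihat k x.
Definition Z_g (g : gate) : R := \sum_x pi_g g x.

Definition G1 : set gate := [set g | is_gate g /\ Z_g g = 1].

Variable phat : 'I_p -> X -> R.

Definition p_mix (l : 'I_p -> R) (x : X) : R := \sum_k l k * phat k x.

Definition Ltilde (l : 'I_p -> R) (g : gate) : R :=
  \sum_k l k * KL (phat k) (pi_g g).

(* gradient of Ltilde in g, coordinate (x,k):
   d/dg(x,k) sum_j l_j D(phat_j || pi_g) = - p_l(x) pihat_k(x) / pi_g(x) *)
Definition gradg_Ltilde (l : 'I_p -> R) (g : gate) : gate :=
  fun x k => - (p_mix l x / pi_g g x) * pihat k x.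

Definition gnorm (h : gate) : R := Num.sqrt (\sum_x \sum_k h x k ^+ 2).

Definition is_proj (S : set gate) (y z : gate) : Prop :=
  S z /\ forall w, S w -> gnorm (fun x k => y x k - z x k)
                          <= gnorm (fun x k => y x k - w x k).

Definition Dmax : R :=
  sup [set d | exists g k, G1 g /\ d = KL (phat k) (pi_g g)].

Definition Gmax : R :=
  sup [set d | exists g l, G1 g /\ simplex l /\ d = gnorm (gradg_Ltilde l g)].

(* max_{l in Delta} Ltilde(l, g)  (the max is attained; sup = max) *)
Definition maxL (g : gate) : R := sup [set Ltilde l g | l in simplex].

Definition Vtilde : R := inf [set maxL g | g in G1].

Definition iteration (T : nat) (eta_l eta_g : R)
    (lam : nat -> 'I_p -> R) (g : nat -> gate) : Prop :=
  (forall k, lam 0%N k = p%:R^-1) /\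
  (forall x k, g 0%N x k = p%:R^-1) /\
  forall t, (t < T)%N ->
    let ell := fun k => KL (phat k) (pi_g (g t)) in
    (forall k, lam t.+1 k =
       lam t k * expR (eta_l * ell k) /
       \sum_j lam t j * expR (eta_l * ell j)) /\
    let v := fun x k => - (p_mix (lam t.+1) x / pi_g (g t) x) * pihat k x in
    is_proj G1 (fun x k => g t x k - eta_g * v x k) (g t.+1).

Definition gbar (T : nat) (g : nat -> gate) : gate :=
  fun x k => T%:R^-1 * \sum_(1 <= t < T.+1) g t x k.

End Defs.

(* Main.v *)
Require Import Defs.
From mathcomp Require Import all_boot all_order all_algebra.
From mathcomp Require Import all_classical all_reals.
From mathcomp Require Import sequences exp.
From mathcomp Require Import ring lra.
Import Order.TTheory GRing.Theory Num.Theory.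
Set Implicit Arguments. Unset Strict Implicit. Unset Printing Implicit Defensive.
Local Open Scope classical_set_scope.
Local Open Scope ring_scope.

Lemma lnsub (R : realType) (a b : R) : 0 < a -> 0 < b -> ln a - ln b <= a / b - 1.
Proof.
move=> a0 b0; rewrite -ln_div ?posrE //.
have := @le_ln1Dx R (a / b - 1); rewrite addrCA subrr addr0; apply.
have : 0 < a / b by rewrite divr_gt0.
lra.
Qed.

Lemma sum_pos_filter (R : realType) (X : finType) (f h : X -> R) :
  (forall x, 0 <= f x) ->
  \sum_(x | 0 < f x) f x * h x = \sum_x f x * h x.
Proof.
move=> f0; rewrite big_mkcond /=; apply: eq_bigr => x _.
case: ifP => // /negbT; rewrite lt_def negb_and negbK.
have -> : (0 <= f x) = true by apply: f0.
by rewrite orbF => /eqP ->; rewrite mul0r.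
Qed.

Lemma KLE (R : realType) (X : finType) (P Q : X -> R) :
  (forall x, 0 <= P x) -> KL P Q = \sum_x P x * ln (P x / Q x).
Proof. by move=> P0; rewrite /KL sum_pos_filter. Qed.

Lemma le_sum1 (R : realType) (X : finType) (f : X -> R) x :
  (forall y, 0 <= f y) -> f x <= \sum_y f y.
Proof.
move=> f0; rewrite (bigD1 x) //= lerDl; apply: sumr_ge0 => y _; exact: f0.
Qed.

Definition sq (R : realType) (X : finType) (p : nat) (h : gate R X p) : R :=
  \sum_x \sum_k h x k ^+ 2.
Definition ip (R : realType) (X : finType) (p : nat) (h1 h2 : gate R X p) : R :=
  \sum_x \sum_k h1 x k * h2 x k.

Lemma sq_ge0 (R : realType) (X : finType) (p : nat) (h : gate R X p) : 0 <= sq h.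
Proof. apply: sumr_ge0 => x _; apply: sumr_ge0 => k _; exact: sqr_ge0. Qed.

Lemma sq_ext (R : realType) (X : finType) (p : nat) (a b : gate R X p) :
  (forall x k, a x k ^+ 2 = b x k ^+ 2) -> sq a = sq b.
Proof. by move=> H; apply: eq_bigr => x _; apply: eq_bigr => k _. Qed.

Lemma sq_lin (R : realType) (X : finType) (p : nat) (a b : gate R X p) (s : R) :
  sq (fun x k => a x k - s * b x k) = sq a - 2 * s * ip a b + s ^+ 2 * sq b.
Proof.
rewrite /sq /ip !mulr_sumr -sumrN -!big_split /=; apply: eq_bigr => x _.
rewrite !mulr_sumr -sumrN -!big_split /=; apply: eq_bigr => k _; ring.
Qed.

Lemma gnorm_sq (R : realType) (X : finType) (p : nat) (a b : gate R X p) :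
  Defs.gnorm a <= Defs.gnorm b -> sq a <= sq b.
Proof. by rewrite /Defs.gnorm ler_sqrt //; apply: sq_ge0. Qed.

Definition pg (R : realType) (X : finType) (p : nat) (g : gate R X p) :=
  (forall x k, 0 <= g x k) /\ (forall x, \sum_k g x k = 1).
Definition mm (R : realType) (X : finType) (p : nat) (pihat : 'I_p -> X -> R) x :=
  \prod_k pihat k x.

Lemma pihat_le1 (R : realType) (X : finType) (p : nat) (pihat : 'I_p -> X -> R) k x :
  (forall k x, 0 <= pihat k x) -> (forall k, \sum_x pihat k x = 1) -> pihat k x <= 1.
Proof. by move=> h0 h1; rewrite -(h1 k); apply: le_sum1. Qed.

Lemma mm_pos (R : realType) (X : finType) (p : nat) (pihat : 'I_p -> X -> R) x :
  (forall k x, 0 < pihat k x) -> 0 < mm pihat x.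
Proof. by move=> h; apply: prodr_gt0 => k _. Qed.

Lemma mm_le (R : realType) (X : finType) (p : nat) (pihat : 'I_p -> X -> R) k x :
  (forall k x, 0 < pihat k x) -> (forall k, \sum_x pihat k x = 1) -> mm pihat x <= pihat k x.
Proof.
move=> h0 h1; rewrite /mm (bigD1 k) //=.
rewrite -[leRHS]mulr1; apply: ler_wpM2l; first exact: ltW.
apply: prodr_ile1 => j _; rewrite ltW //=; apply: pihat_le1 => // ? ?; exact: ltW.
Qed.

Lemma pi_ge_mm (R : realType) (X : finType) (p : nat) (pihat : 'I_p -> X -> R) g x :
  (forall k x, 0 < pihat k x) -> (forall k, \sum_x pihat k x = 1) -> pg g ->
  mm pihat x <= pi_g pihat g x.
Proof.
move=> h0 h1 [g0 g1].
have -> : mm pihat x = \sum_k g x k * mm pihat x by rewrite -mulr_suml g1 mul1r.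
apply: ler_sum => k _; apply: ler_wpM2l => //; exact: mm_le.
Qed.

Lemma pi_pos (R : realType) (X : finType) (p : nat) (pihat : 'I_p -> X -> R) g x :
  (forall k x, 0 < pihat k x) -> (forall k, \sum_x pihat k x = 1) -> pg g ->
  0 < pi_g pihat g x.
Proof. move=> h0 h1 hg; exact: lt_le_trans (mm_pos x h0) (pi_ge_mm x h0 h1 hg). Qed.

Lemma KL_ub (R : realType) (X : finType) (p : nat) (pihat phat : 'I_p -> X -> R) g k :
  (forall k x, 0 < pihat k x) -> (forall k, \sum_x pihat k x = 1) ->
  (forall k x, 0 <= phat k x) -> (forall k, \sum_x phat k x = 1) -> pg g ->
  KL (phat k) (pi_g pihat g) <= \sum_x (mm pihat x)^-1.
Proof.
move=> h0 h1 q0 q1 hg; rewrite KLE //; apply: ler_sum => x _.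
have mp := mm_pos x h0; have pp := pi_pos x h0 h1 hg.
have hmi : 0 < (mm pihat x)^-1 by rewrite invr_gt0.
case: (boolP (0 < phat k x)) => hp; last first.
  have -> : phat k x = 0 by apply/eqP; rewrite eq_le q0 andbT leNgt.
  by rewrite mul0r ltW.
have pl1 : phat k x <= 1 by apply: pihat_le1.
set u := (pi_g pihat g x)^-1.
have u0 : 0 < u by rewrite invr_gt0.
have um : u <= (mm pihat x)^-1 by rewrite /u lef_pV2 ?posrE //; exact: pi_ge_mm.
have L : ln (phat k x / pi_g pihat g x) <= phat k x * u - 1.
  by rewrite ln_div ?posrE //; apply: lnsub.
apply: (@le_trans _ _ (phat k x * (phat k x * u - 1))); first by apply: ler_wpM2l => //; exact: ltW.
have h2 : phat k x * phat k x <= 1 by nra.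
have h3 : phat k x * phat k x * u <= u.
  by rewrite -[leRHS]mul1r; apply: ler_wpM2r => //; exact: ltW.
have -> : phat k x * (phat k x * u - 1) = phat k x * phat k x * u - phat k x by ring.
lra.
Qed.

Lemma KL_ge0 (R : realType) (X : finType) (p : nat) (pihat phat : 'I_p -> X -> R) g k :
  (forall k x, 0 < pihat k x) -> (forall k, \sum_x pihat k x = 1) ->
  (forall k x, 0 <= phat k x) -> (forall k, \sum_x phat k x = 1) -> pg g ->
  Z_g pihat g = 1 -> 0 <= KL (phat k) (pi_g pihat g).
Proof.
move=> h0 h1 q0 q1 hg hz.
apply: (@le_trans _ _ (\sum_(x | 0 < phat k x) (phat k x - pi_g pihat g x))).
  rewrite sumrB.
  have -> : \sum_(x | 0 < phat k x) phat k x = 1.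
    rewrite -(q1 k); have := @sum_pos_filter _ _ (phat k) (fun=> 1) (q0 k).
    under eq_bigr do rewrite mulr1; under [in X in _ = X -> _]eq_bigr do rewrite mulr1.
    by [].
  rewrite subr_ge0 -hz /Z_g [leLHS]big_mkcond /=; apply: ler_sum => x _.
  by case: ifP => // _; apply: ltW; apply: pi_pos.
apply: ler_sum => x hp.
have pp := pi_pos x h0 h1 hg.
rewrite ln_div ?posrE //.
have := lnsub pp hp.
have -> : pi_g pihat g x / phat k x - 1 = (pi_g pihat g x - phat k x) / phat k x.
  by field; rewrite gt_eqF.
rewrite ler_pdivlMr // => H; nra.
Qed.

Lemma Lconv (R : realType) (X : finType) (p : nat) (pihat phat : 'I_p -> X -> R) l g w :
  (forall k x, 0 < pihat k x) -> (forall k, \sum_x pihat k x = 1) ->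
  (forall k x, 0 <= phat k x) -> (forall k, 0 <= l k) -> pg g -> pg w ->
  Ltilde pihat phat l g - Ltilde pihat phat l w <=
  ip (gradg_Ltilde pihat phat l g) (fun x k => g x k - w x k).
Proof.
move=> h0 h1 q0 l0 hg hw.
apply: (@le_trans _ _ (\sum_k l k * \sum_x phat k x *
          (pi_g pihat w x / pi_g pihat g x - 1))).
  rewrite /Ltilde -sumrB; apply: ler_sum => k _; rewrite -mulrBr; apply: ler_wpM2l => //.
  rewrite !KLE // -sumrB; apply: ler_sum => x _; rewrite -mulrBr.
  have pg0 := pi_pos x h0 h1 hg; have pw0 := pi_pos x h0 h1 hw.
  case: (boolP (0 < phat k x)) => hp.
    apply: ler_wpM2l; first exact: ltW.
    rewrite !ln_div ?posrE //.
    have := lnsub pw0 pg0; lra.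
  have -> : phat k x = 0 by apply/eqP; rewrite eq_le q0 andbT leNgt.
  by rewrite !mul0r.
rewrite le_eqVlt; apply/orP; left; apply/eqP.
under eq_bigr do rewrite mulr_sumr.
rewrite exchange_big /ip; apply: eq_bigr => x _.
have pg0 := pi_pos x h0 h1 hg.
transitivity (p_mix phat l x * (pi_g pihat w x / pi_g pihat g x - 1)).
  by rewrite /p_mix mulr_suml; apply: eq_bigr => k _; rewrite mulrA.
transitivity (- (p_mix phat l x / pi_g pihat g x) * (pi_g pihat g x - pi_g pihat w x)).
  by field; rewrite gt_eqF.
rewrite /pi_g -sumrB mulr_sumr; apply: eq_bigr => k _; rewrite /gradg_Ltilde; ring.
Qed.

Lemma G1_pg (R : realType) (X : finType) (p : nat) (pihat : 'I_p -> X -> R) g :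
  G1 pihat g -> pg g.
Proof. by move=> [[h1 h2] _]; split=> // x k; case/andP: (h1 x k). Qed.

Lemma simplex_le1 (R : realType) (p : nat) (l : 'I_p -> R) k :
  simplex l -> 0 <= l k <= 1.
Proof. by move=> [l0 l1]; rewrite l0 /= -l1; apply: le_sum1. Qed.

Lemma grad_bound (R : realType) (X : finType) (p : nat) (pihat phat : 'I_p -> X -> R) l g :
  (forall k x, 0 < pihat k x) -> (forall k, \sum_x pihat k x = 1) ->
  (forall k x, 0 <= phat k x) -> (forall k, \sum_x phat k x = 1) ->
  simplex l -> pg g ->
  Defs.gnorm (gradg_Ltilde pihat phat l g) <=
  Num.sqrt (\sum_(x : X) \sum_(k < p) ((mm pihat x)^-1) ^+ 2).
Proof.
move=> h0 h1 q0 q1 hl hg; rewrite /Defs.gnorm ler_sqrt; last first.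
  by apply: sumr_ge0 => x _; apply: sumr_ge0 => k _; apply: sqr_ge0.
apply: ler_sum => x _; apply: ler_sum => k _.
rewrite /gradg_Ltilde mulNr sqrrN.
have mp := mm_pos x h0; have pp := pi_pos x h0 h1 hg.
set u := (pi_g pihat g x)^-1.
have u0 : 0 < u by rewrite invr_gt0.
have um : u <= (mm pihat x)^-1 by rewrite /u lef_pV2 ?posrE //; exact: pi_ge_mm.
have pm0 : 0 <= p_mix phat l x.
  by apply: sumr_ge0 => j _; apply: mulr_ge0; [case/andP: (simplex_le1 j hl)|].
have pm1 : p_mix phat l x <= 1.
  case: hl => l0 l1; rewrite -l1; apply: ler_sum => j _.
  rewrite -[leRHS]mulr1; apply: ler_wpM2l => //; exact: pihat_le1.
have pi1 : pihat k x <= 1 by apply: pihat_le1 => // ? ?; exact: ltW.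
have pi0 : 0 <= pihat k x by exact: ltW.
have c0 : 0 <= p_mix phat l x / pi_g pihat g x * pihat k x.
  by rewrite mulr_ge0 // mulr_ge0 // ltW.
have c1 : p_mix phat l x / pi_g pihat g x * pihat k x <= (mm pihat x)^-1.
  rewrite -/u; apply: (@le_trans _ _ u) => //.
  have h4 : p_mix phat l x * u <= u by rewrite -[leRHS]mul1r; apply: ler_wpM2r => //; exact: ltW.
  apply: (@le_trans _ _ (p_mix phat l x * u)) => //.
  rewrite -[leRHS]mulr1; apply: ler_wpM2l => //; rewrite mulr_ge0 // ltW //.
by rewrite ler_sqr // ?nnegrE // ltW // invr_gt0.
Qed.

Lemma Gm_ub (R : realType) (X : finType) (p : nat) (pihat phat : 'I_p -> X -> R) l g :
  (forall k x, 0 < pihat k x) -> (forall k, \sum_x pihat k x = 1) ->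
  (forall k x, 0 <= phat k x) -> (forall k, \sum_x phat k x = 1) ->
  simplex l -> G1 pihat g ->
  Defs.gnorm (gradg_Ltilde pihat phat l g) <= Gmax pihat phat.
Proof.
move=> h0 h1 q0 q1 hl hg; apply: ub_le_sup; last by exists g, l.
exists (Num.sqrt (\sum_(x : X) \sum_(k < p) ((mm pihat x)^-1) ^+ 2)).
move=> d [g' [l' [hg' [hl' ->]]]]; apply: grad_bound => //; exact: G1_pg hg'.
Qed.

Lemma Dm_ub (R : realType) (X : finType) (p : nat) (pihat phat : 'I_p -> X -> R) k g :
  (forall k x, 0 < pihat k x) -> (forall k, \sum_x pihat k x = 1) ->
  (forall k x, 0 <= phat k x) -> (forall k, \sum_x phat k x = 1) ->
  G1 pihat g -> KL (phat k) (pi_g pihat g) <= Dmax pihat phat.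
Proof.
move=> h0 h1 q0 q1 hg; apply: ub_le_sup; last by exists g, k.
exists (\sum_x (mm pihat x)^-1).
move=> d [g' [k' [hg' ->]]]; apply: KL_ub => //; exact: G1_pg hg'.
Qed.

Lemma L_maxL (R : realType) (X : finType) (p : nat) (pihat phat : 'I_p -> X -> R) l g :
  simplex l -> Ltilde pihat phat l g <= maxL pihat phat g.
Proof.
move=> hl; apply: ub_le_sup; last by exists l.
exists (\sum_k `|KL (phat k) (pi_g pihat g)|).
move=> d [l' hl' <-]; apply: ler_sum => k _.
case/andP: (simplex_le1 k hl') => a0 a1.
have := ler_norm (KL (phat k) (pi_g pihat g)).
have := normr_ge0 (KL (phat k) (pi_g pihat g)).
nra.
Qed.

Lemma sum_comb (R : realType) (I : finType) (s : R) (F G : I -> R) :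
  \sum_i (F i + s * (G i - F i)) = \sum_i F i + s * (\sum_i G i - \sum_i F i).
Proof. by rewrite -sumrB mulr_sumr -big_split. Qed.

Lemma G1_conv (R : realType) (X : finType) (p : nat) (pihat : 'I_p -> X -> R) z w s :
  G1 pihat z -> G1 pihat w -> 0 <= s <= 1 ->
  G1 pihat (fun x k => z x k + s * (w x k - z x k)).
Proof.
move=> [[z01 z1] zZ] [[w01 w1] wZ] /andP[s0 s1]; split; first split.
- move=> x k; case/andP: (z01 x k) => a0 a1; case/andP: (w01 x k) => b0 b1.
  apply/andP; split; nra.
- by move=> x; rewrite sum_comb z1 w1 subrr mulr0 addr0.
rewrite /Z_g.
have E : forall x, pi_g pihat (fun x k => z x k + s * (w x k - z x k)) x =
   pi_g pihat z x + s * (pi_g pihat w x - pi_g pihat z x).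
  move=> x; rewrite /pi_g -sum_comb; apply: eq_bigr => k _; ring.
under eq_bigr do rewrite E.
by rewrite sum_comb -/(Z_g pihat z) -/(Z_g pihat w) zZ wZ subrr mulr0 addr0.
Qed.

Lemma proj_ineq (R : realType) (X : finType) (p : nat) (pihat : 'I_p -> X -> R) y z w :
  is_proj (G1 pihat) y z -> G1 pihat w ->
  sq (fun x k => z x k - w x k) <= sq (fun x k => y x k - w x k).
Proof.
move=> [hz hmin] hw.
set e : gate R X p := fun x k => y x k - z x k.
set d : gate R X p := fun x k => w x k - z x k.
have key : forall s, 0 < s <= 1 -> 2 * ip e d <= s * sq d.
  move=> s /andP[s0 s1].
  have hs : 0 <= s <= 1 by rewrite ltW.
  have := gnorm_sq (hmin _ (G1_conv hz hw hs)).
  rewrite (@sq_ext _ _ _ (fun x k => y x k - (z x k + s * (w x k - z x k)))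
              (fun x k => e x k - s * d x k)); last by move=> x k; rewrite /e /d; congr (_ ^+ 2); ring.
  rewrite sq_lin -/e => H.
  have : 2 * s * ip e d <= s ^+ 2 * sq d by lra.
  have -> : 2 * s * ip e d = s * (2 * ip e d) by ring.
  have -> : s ^+ 2 * sq d = s * (s * sq d) by ring.
  by rewrite ler_pM2l.
have ipn : ip e d <= 0.
  rewrite leNgt; apply/negP => ip0.
  have sd0 := sq_ge0 d.
  set s := ip e d / (ip e d + sq d).
  have den : 0 < ip e d + sq d by lra.
  have s0 : 0 < s by rewrite divr_gt0.
  have s1 : s <= 1 by rewrite ler_pdivrMr // mul1r; lra.
  have := key s; rewrite s0 s1 /= => /(_ isT).
  have : s * sq d <= ip e d.
    rewrite /s mulrAC ler_pdivrMr //; nra.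
  lra.
rewrite (@sq_ext _ _ _ (fun x k => y x k - w x k) (fun x k => e x k - 1 * d x k)); last first.
  by move=> x k; rewrite /e /d; congr (_ ^+ 2); ring.
rewrite sq_lin expr1n mul1r mulr1.
rewrite (@sq_ext _ _ _ (fun x k => z x k - w x k) d); last first.
  by move=> x k; rewrite /d; ring.
have := sq_ge0 e; lra.
Qed.

Lemma hedge_simplex (R : realType) (p T : nat) (eta : R) (lam ell : nat -> 'I_p -> R) :
  (0 < p)%N ->
  (forall k, lam 0%N k = p%:R^-1) ->
  (forall t, (t < T)%N -> forall k, lam t.+1 k =
      lam t k * expR (eta * ell t k) / \sum_j lam t j * expR (eta * ell t j)) ->
  forall t, (t <= T)%N -> (forall k, 0 < lam t k) /\ \sum_k lam t k = 1.
Proof.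
move=> p0 h0 hs; elim=> [_|t IH tT].
  have pp : (0 : R) < p%:R by rewrite ltr0n.
  split=> [k|]; first by rewrite h0 invr_gt0.
  under eq_bigr do rewrite h0.
  by rewrite sumr_const card_ord -[_ *+ p]mulr_natl mulfV // gt_eqF.
have tT' : (t < T)%N by [].
case: (IH (ltnW tT')) => l0 l1.
have Z0 : 0 < \sum_j lam t j * expR (eta * ell t j).
  pose k0 := Ordinal p0.
  apply: (@lt_le_trans _ _ (lam t k0 * expR (eta * ell t k0))).
    by rewrite mulr_gt0 // expR_gt0.
  by apply: le_sum1 => j; rewrite ltW // mulr_gt0 // expR_gt0.
split=> [k|].
  by rewrite hs // divr_gt0 // mulr_gt0 // expR_gt0.
under eq_bigr do rewrite hs //.
by rewrite -mulr_suml mulfV // gt_eqF.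
Qed.

Lemma hedge_bound (R : realType) (p T : nat) (eta : R) (lam ell : nat -> 'I_p -> R) k :
  (0 < p)%N ->
  (forall k, lam 0%N k = p%:R^-1) ->
  (forall t, (t < T)%N -> forall k, lam t.+1 k =
      lam t k * expR (eta * ell t k) / \sum_j lam t j * expR (eta * ell t j)) ->
  eta * \sum_(0 <= t < T) ell t k <=
  ln p%:R + eta * \sum_(0 <= t < T) \sum_j lam t.+1 j * ell t j.
Proof.
move=> p0 h0 hs.
have HS := hedge_simplex p0 h0 hs.
have step : forall t, (t < T)%N -> forall j,
    ln (lam t.+1 j) - ln (lam t j) =
    eta * ell t j - ln (\sum_j lam t j * expR (eta * ell t j)).
  move=> t tT j.
  case: (HS t (ltnW tT)) => l0 l1.
  have Z0 : 0 < \sum_j lam t j * expR (eta * ell t j).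
    apply: (@lt_le_trans _ _ (lam t j * expR (eta * ell t j))).
      by rewrite mulr_gt0 // expR_gt0.
    by apply: le_sum1 => i; rewrite ltW // mulr_gt0 // expR_gt0.
  rewrite hs // ln_div ?posrE ?mulr_gt0 ?expR_gt0 // lnM ?posrE ?expR_gt0 // expRK.
  ring.
have step2 : forall t, (t < T)%N ->
    eta * ell t k - eta * \sum_j lam t.+1 j * ell t j <= ln (lam t.+1 k) - ln (lam t k).
  move=> t tT; rewrite step //.
  suff : ln (\sum_j lam t j * expR (eta * ell t j)) <= eta * \sum_j lam t.+1 j * ell t j by lra.
  case: (HS t (ltnW tT)) => l0 l1; case: (HS t.+1 tT) => m0 m1.
  have : 0 <= \sum_j lam t.+1 j * (ln (lam t.+1 j) - ln (lam t j)).
    apply: (@le_trans _ _ (\sum_j (lam t.+1 j - lam t j))).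
      by rewrite sumrB m1 l1 subrr.
    apply: ler_sum => j _.
    have := lnsub (l0 j) (m0 j).
    have -> : lam t j / lam t.+1 j - 1 = (lam t j - lam t.+1 j) / lam t.+1 j.
      by field; rewrite gt_eqF.
    rewrite ler_pdivlMr // => H; nra.
  under eq_bigr do rewrite step //.
  under eq_bigr do rewrite mulrBr.
  by rewrite sumrB -mulr_suml m1 mul1r mulr_sumr; under eq_bigr do rewrite mulrCA; lra.
have := @ler_sum_nat _ 0 T _ _ (fun t ht => step2 t (proj2 (andP ht))).
rewrite telescope_sumr // sumrB -!mulr_sumr h0.
case: (HS T (leqnn T)) => lT0 lT1.
have lT : ln (lam T k) <= 0 by apply: ln_le0; rewrite -lT1; apply: le_sum1 => j; exact: ltW.
have pp : (0 : R) < p%:R by rewrite ltr0n.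
rewrite lnV ?posrE //.
lra.
Qed.

Lemma ip_sym (R : realType) (X : finType) (p : nat) (a b : gate R X p) : ip a b = ip b a.
Proof. by apply: eq_bigr => x _; apply: eq_bigr => k _; rewrite mulrC. Qed.

Lemma ip_sum (R : realType) (X : finType) (p : nat) (I : Type) (r : seq I)
   (h : gate R X p) (F : I -> gate R X p) :
  \sum_(i <- r) ip h (F i) = ip h (fun x k => \sum_(i <- r) F i x k).
Proof.
rewrite /ip exchange_big; apply: eq_bigr => x _.
rewrite exchange_big; apply: eq_bigr => k _; by rewrite mulr_sumr.
Qed.

Lemma ogd_step (R : realType) (X : finType) (p : nat) (pihat : 'I_p -> X -> R) g v z w (eta : R) :
  is_proj (G1 pihat) (fun x k => g x k - eta * v x k) z -> G1 pihat w ->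
  2 * eta * ip v (fun x k => g x k - w x k) <=
  sq (fun x k => g x k - w x k) - sq (fun x k => z x k - w x k) + eta ^+ 2 * sq v.
Proof.
move=> hp hw; have := proj_ineq hp hw.
rewrite (@sq_ext _ _ _ (fun x k => g x k - eta * v x k - w x k)
   (fun x k => (g x k - w x k) - eta * v x k)); last by move=> x k; congr (_ ^+ 2); ring.
rewrite sq_lin ip_sym; lra.
Qed.

Lemma g0_G1 (R : realType) (X : finType) (p : nat) (pihat : 'I_p -> X -> R) (g : gate R X p) :
  (0 < p)%N -> (forall k, \sum_x pihat k x = 1) -> (forall x k, g x k = p%:R^-1) ->
  G1 pihat g.
Proof.
move=> p0 h1 hg.
have pp : (0 : R) < p%:R by rewrite ltr0n.
have sp : \sum_(k < p) (p%:R^-1 : R) = 1.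
  by rewrite sumr_const card_ord -[_ *+ p]mulr_natl mulfV // gt_eqF.
split; first split.
- move=> x k; rewrite hg invr_ge0 ltW //=; rewrite invr_le1 ?unitfE ?gt_eqF //.
  by rewrite ler1n.
- by move=> x; under eq_bigr do rewrite hg.
rewrite /Z_g /pi_g.
under eq_bigr do under eq_bigr do rewrite hg.
rewrite exchange_big /=.
under eq_bigr do rewrite -mulr_sumr h1 mulr1.
exact: sp.
Qed.

Lemma avg_conv (R : realType) (X : finType) (p : nat) (pihat phat : 'I_p -> X -> R) ls T g :
  (forall k x, 0 < pihat k x) -> (forall k, \sum_x pihat k x = 1) ->
  (forall k x, 0 <= phat k x) -> (forall k, 0 <= ls k) -> (1 <= T)%N ->
  (forall t, (1 <= t <= T)%N -> pg (g t)) ->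
  T%:R * Ltilde pihat phat ls (gbar T g) <= \sum_(1 <= t < T.+1) Ltilde pihat phat ls (g t).
Proof.
move=> h0 h1 q0 l0 T1 hg.
have TT : (0 : R) < T%:R by rewrite ltr0n.
have pgb : pg (gbar T g).
  split.
    move=> x k; rewrite /gbar mulr_ge0 ?invr_ge0 ?ler0n //.
    rewrite big_nat_cond; apply: sumr_ge0 => t /andP[ht _].
    by case: (hg t ht) => a _; apply: a.
  move=> x; rewrite /gbar -mulr_sumr exchange_big /= big_nat_cond.
  rewrite (eq_bigr (fun=> 1)); last by move=> t /andP[ht _]; case: (hg t ht).
  rewrite -big_nat_cond sumr_const_nat subSS subn0 -[_ *+ T]mulr_natl mulr1 mulVf //.
  by rewrite gt_eqF.
have H : \sum_(1 <= t < T.+1) (Ltilde pihat phat ls (gbar T g) - Ltilde pihat phat ls (g t))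
   <= 0.
  apply: (@le_trans _ _ (\sum_(1 <= t < T.+1) ip (gradg_Ltilde pihat phat ls (gbar T g))
             (fun x k => gbar T g x k - g t x k))).
    rewrite big_nat_cond [leRHS]big_nat_cond; apply: ler_sum => t /andP[ht _].
    apply: Lconv => //; exact: hg.
  rewrite ip_sum le_eqVlt; apply/orP; left; apply/eqP.
  rewrite /ip big1 // => x _; rewrite big1 // => k _.
  apply/eqP; rewrite mulf_eq0; apply/orP; right; apply/eqP.
  rewrite sumrB sumr_const_nat subSS subn0 {1}/gbar -[(_ * _) *+ T]mulr_natr.
  by rewrite mulrAC mulVf ?gt_eqF // mul1r subrr.
move: H; rewrite sumrB sumr_const_nat subSS subn0 -[_ *+ T]mulr_natl; lra.
Qed.

Lemma L_Dm (R : realType) (X : finType) (p : nat) (pihat phat : 'I_p -> X -> R) ls g :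
  (forall k x, 0 < pihat k x) -> (forall k, \sum_x pihat k x = 1) ->
  (forall k x, 0 <= phat k x) -> (forall k, \sum_x phat k x = 1) ->
  simplex ls -> G1 pihat g -> Ltilde pihat phat ls g <= Dmax pihat phat.
Proof.
move=> h0 h1 q0 q1 hl hg.
have -> : Dmax pihat phat = \sum_k ls k * Dmax pihat phat by rewrite -mulr_suml hl.2 mul1r.
apply: ler_sum => k _; apply: ler_wpM2l; first by case: hl.
exact: Dm_ub.
Qed.

Lemma L_ge0 (R : realType) (X : finType) (p : nat) (pihat phat : 'I_p -> X -> R) ls g :
  (forall k x, 0 < pihat k x) -> (forall k, \sum_x pihat k x = 1) ->
  (forall k x, 0 <= phat k x) -> (forall k, \sum_x phat k x = 1) ->
  simplex ls -> G1 pihat g -> 0 <= Ltilde pihat phat ls g.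
Proof.
move=> h0 h1 q0 q1 hl hg; apply: sumr_ge0 => k _; apply: mulr_ge0; first by case: hl.
apply: KL_ge0 => //; [exact: G1_pg hg | exact: hg.2].
Qed.

Unset Implicit Arguments.
Theorem mainTheorem12 (R : realType) (X : finType) (p : nat) :
  (2 <= p)%N ->
  exists a b C : set (gate R X p) -> R -> R -> R,
  forall (phat pihat : 'I_p -> X -> R),
    (forall k x, 0 <= phat k x) -> (forall k, \sum_x phat k x = 1) ->
    (forall x, exists k, 0 < phat k x) ->
    (forall k x, 0 < pihat k x) -> (forall k, \sum_x pihat k x = 1) ->
    let G := G1 pihat in
    let Dm := Dmax pihat phat in
    let Gm := Gmax pihat phat in
    0 < a G Dm Gm /\ 0 < b G Dm Gm /\ 0 < C G Dm Gm /\
    forall (T : nat) (lam : nat -> 'I_p -> R) (g : nat -> gate R X p),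
      (1 <= T)%N ->
      iteration pihat phat T (a G Dm Gm / Num.sqrt T%:R)
                             (b G Dm Gm / Num.sqrt T%:R) lam g ->
      maxL pihat phat (gbar T g) - Vtilde pihat phat
        <= C G Dm Gm * Num.sqrt (ln p%:R / T%:R).
Proof.
move=> p2.
have p0 : (0 < p)%N by apply: leq_trans p2.
have lnp : 0 < ln (p%:R : R) by apply: ln_gt0; rewrite ltr1n.
pose D2 : R := \sum_(x : X) \sum_(k < p) (1 : R).
have D20 : 0 <= D2 by apply: sumr_ge0 => x _; apply: sumr_ge0 => k _.
exists (fun _ _ _ => 1), (fun _ _ _ => 1),
  (fun _ Dm Gm => (ln p%:R + D2 / 2 + Gm ^+ 2 / 2 + `|Dm|) / Num.sqrt (ln p%:R)).
move=> phat pihat q0 q1 qx h0 h1 G Dm Gm /=.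
have sl0 : 0 < Num.sqrt (ln (p%:R : R)) by rewrite sqrtr_gt0.
have K0 : 0 < ln p%:R + D2 / 2 + Gm ^+ 2 / 2 + `|Dm|.
  have := normr_ge0 Dm; have := sqr_ge0 Gm; lra.
split; first exact: ltr01. split; first exact: ltr01.
split; first by apply: divr_gt0.
move=> T lam g T1 [hl0 [hg0 hit]].
set K := ln p%:R + D2 / 2 + Gm ^+ 2 / 2 + `|Dm|.
set r := Num.sqrt (T%:R : R).
have TT : (0 : R) < T%:R by rewrite ltr0n.
have r0 : 0 < r by rewrite sqrtr_gt0.
have r1 : 1 <= r by rewrite /r -{1}sqrtr1 ler_sqrt ?ler1n // ler0n.
have rr : r * r = T%:R by rewrite -expr2 sqr_sqrtr // ltW.
have -> : K / Num.sqrt (ln p%:R) * Num.sqrt (ln p%:R / T%:R) = K / r.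
  rewrite sqrtrM ?ltW // sqrtrV ?ler0n // -/r; field.
  by rewrite !gt_eqF.
pose ell := fun t (k : 'I_p) => KL (phat k) (pi_g pihat (g t)).
have hs : forall t, (t < T)%N -> forall k, lam t.+1 k =
    lam t k * expR (1 / r * ell t k) / \sum_j lam t j * expR (1 / r * ell t j).
  by move=> t tT k; case: (hit t tT) => H _; apply: H.
have HS := @hedge_simplex R p T (1 / r) lam ell p0 hl0 hs.
have hsimp : forall t, (t <= T)%N -> simplex (lam t).
  by move=> t tT; case: (HS t tT) => a b; split=> // k; apply: ltW.
have hproj : forall t, (t < T)%N -> is_proj (G1 pihat)
    (fun x k => g t x k - 1 / r * gradg_Ltilde pihat phat (lam t.+1) (g t) x k) (g t.+1).
  by move=> t tT; case: (hit t tT) => _ H; apply: H.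
have hG : forall t, (t <= T)%N -> G1 pihat (g t).
  case=> [_|t tT]; first exact: g0_G1.
  by case: (hproj t tT).
have key : forall w, G1 pihat w -> forall ls, simplex ls ->
    Ltilde pihat phat ls (gbar T g) <= maxL pihat phat w + K / r.
  move=> w hw ls hl.
  set S0 := \sum_(0 <= t < T) Ltilde pihat phat ls (g t).
  set S1 := \sum_(0 <= t < T) Ltilde pihat phat (lam t.+1) (g t).
  set I := \sum_(0 <= t < T) ip (gradg_Ltilde pihat phat (lam t.+1) (g t))
                                (fun x k => g t x k - w x k).
  set M := maxL pihat phat w.
  have A : 1 / r * S0 <= ln p%:R + 1 / r * S1.
    apply: (@le_trans _ _ (\sum_k ls k * (ln p%:R + 1 / r * S1))); last first.
      by case: (hl) => _ hl2; rewrite -mulr_suml (_ : \sum_i ls i = 1) ?mul1r.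
    rewrite /S0 /S1 /Ltilde exchange_big mulr_sumr; apply: ler_sum => k _ /=.
    rewrite -mulr_sumr mulrCA; apply: ler_wpM2l; first by case: hl.
    exact: (@hedge_bound R p T (1 / r) lam ell k p0 hl0 hs).
  have B : S1 <= T%:R * M + I.
    have -> : T%:R * M = \sum_(0 <= t < T) M by rewrite sumr_const_nat subn0 mulr_natl.
    rewrite /I /S1 -big_split /=.
    rewrite big_nat_cond [leRHS]big_nat_cond; apply: ler_sum => t /andP[/andP[_ tT] _].
    have := Lconv (l := lam t.+1) h0 h1 q0 (hsimp _ tT).1 (G1_pg (hG _ (ltnW tT))) (G1_pg hw).
    have := L_maxL pihat phat w (hsimp _ tT); rewrite -/M; lra.
  have C : 2 * (1 / r) * I <= D2 + T%:R * ((1 / r) ^+ 2 * Gm ^+ 2).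
    have Cs : forall t, (t < T)%N ->
      2 * (1 / r) * ip (gradg_Ltilde pihat phat (lam t.+1) (g t)) (fun x k => g t x k - w x k)
      <= ((- sq (fun x k => g t.+1 x k - w x k)) - (- sq (fun x k => g t x k - w x k)))
         + (1 / r) ^+ 2 * Gm ^+ 2.
      move=> t tT.
      have := ogd_step (hproj t tT) hw.
      have gn := Gm_ub h0 h1 q0 q1 (hsimp _ tT) (hG _ (ltnW tT)); rewrite -/Gm in gn.
      have sqv : sq (gradg_Ltilde pihat phat (lam t.+1) (g t)) <= Gm ^+ 2.
        have e : sq (gradg_Ltilde pihat phat (lam t.+1) (g t)) =
                 Defs.gnorm (gradg_Ltilde pihat phat (lam t.+1) (g t)) ^+ 2.
          by rewrite /Defs.gnorm sqr_sqrtr // sq_ge0.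
        have gn0 : 0 <= Defs.gnorm (gradg_Ltilde pihat phat (lam t.+1) (g t)) by apply: sqrtr_ge0.
        rewrite e; nra.
      have : (1 / r) ^+ 2 * sq (gradg_Ltilde pihat phat (lam t.+1) (g t)) <= (1 / r) ^+ 2 * Gm ^+ 2.
        by apply: ler_wpM2l => //; apply: sqr_ge0.
      lra.
    have := @ler_sum_nat R 0 T _ _ (fun t ht => Cs t (proj2 (andP ht))).
    rewrite big_split /= telescope_sumr // sumr_const_nat subn0 -mulr_natl -mulr_sumr -/I.
    have s0 : sq (fun x k => g 0%N x k - w x k) <= D2.
      apply: ler_sum => x _; apply: ler_sum => k _.
      case: (hG 0%N (leq0n T)) => [[a _] _]; case: (hw) => [[b _] _].
      case/andP: (a x k) => a0 a1; case/andP: (b x k) => b0 b1; nra.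
    have := sq_ge0 (fun x k => g T x k - w x k).
    lra.
  have D : \sum_(1 <= t < T.+1) Ltilde pihat phat ls (g t) <= S0 + `|Dm|.
    rewrite big_add1 /=.
    have tel := telescope_sumr (fun t => Ltilde pihat phat ls (g t)) (leq0n T).
    simpl in tel.
    have -> : \sum_(0 <= t < T) Ltilde pihat phat ls (g t.+1) =
              S0 + (Ltilde pihat phat ls (g T) - Ltilde pihat phat ls (g 0%N)).
      by rewrite -tel /S0 -big_split /=; apply: eq_bigr => t _; ring.
    have := L_Dm h0 h1 q0 q1 hl (hG T (leqnn T)); rewrite -/Dm.
    have := L_ge0 h0 h1 q0 q1 hl (hG 0%N (leq0n T)).
    have := ler_norm Dm.
    lra.
  have E := avg_conv h0 h1 q0 hl.1 T1 (fun t ht => G1_pg (hG t (proj2 (andP ht)))).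
  have hu : r * (1 / r) = 1 by rewrite mul1r mulfV // gt_eqF.
  have A' : S0 <= r * ln p%:R + S1.
    have := ler_wpM2l (ltW r0) A.
    have -> : r * (1 / r * S0) = (r * (1 / r)) * S0 by ring.
    have -> : r * (ln p%:R + 1 / r * S1) = r * ln p%:R + (r * (1 / r)) * S1 by ring.
    by rewrite hu !mul1r.
  have C' : I <= r * (D2 / 2) + r * (Gm ^+ 2 / 2).
    have r2 : 0 <= r / 2 by rewrite divr_ge0 // ltW.
    have := ler_wpM2l r2 C.
    have -> : r / 2 * (2 * (1 / r) * I) = (r * (1 / r)) * I by field; rewrite gt_eqF.
    have -> : r / 2 * (D2 + T%:R * ((1 / r) ^+ 2 * Gm ^+ 2)) =
        r * (D2 / 2) + (r * (1 / r)) * (r * (1 / r)) * T%:R / r * (Gm ^+ 2 / 2).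
      by field; rewrite gt_eqF.
    by rewrite hu !mul1r -rr mulrK // unitfE gt_eqF.
  have Dm0 : `|Dm| <= r * `|Dm| by have := normr_ge0 Dm; nra.
  have F : r * r * Ltilde pihat phat ls (gbar T g) <= r * r * M + r * K.
    rewrite rr /K; lra.
  have F' : r * Ltilde pihat phat ls (gbar T g) <= r * M + K.
    rewrite -(ler_pM2l r0); have -> : r * (r * M + K) = r * r * M + r * K by ring.
    by rewrite mulrA.
  rewrite -(ler_pM2l r0) mulrDr mulrCA mulfV ?gt_eqF // mulr1; exact: F'.
have hne : [set Ltilde pihat phat l (gbar T g) | l in @simplex R p] !=set0.
  by exists (Ltilde pihat phat (lam 0%N) (gbar T g)); exists (lam 0%N) => //; apply: hsimp.
have lb : lbound [set maxL pihat phat w | w in G1 pihat] (maxL pihat phat (gbar T g) - K / r).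
  move=> d [w hw <-].
  suff : maxL pihat phat (gbar T g) <= maxL pihat phat w + K / r by lra.
  rewrite /maxL; apply: ge_sup => // d' [l hl <-]; exact: key.
have hne2 : [set maxL pihat phat w | w in G1 pihat] !=set0.
  by exists (maxL pihat phat (g 0%N)); exists (g 0%N) => //; apply: hG.
have := lb_le_inf hne2 lb.
rewrite /Vtilde; lra.
Qed.
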